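(* For all integers $m,n\geq 1$, \[p^{ed}_{od}(m,n)-p^{ed}_{od}(m,n-1)=D_e(m,n-1)+D_e(m-1,n-1)-D_o(m,n-1).\]
   Context: $\mathcal{P}^{ed}_{od}$ is the set of integer partitions such that: - all parts are distinct; - every odd part is smaller than every even part; - at least one odd part appears. For integers $m,n\ge 0$: - $p^{ed}_{od}(m,n)$ is the number of partitions of $n$ in $\mathcal{P}^{ed}_{od}$ with exactly $m$ parts; in particular $p^{ed}_{od}(m,0)=0$. - $D_o(m,n)$ is the number of partitions of $n$ into exactly $m$ distinct odd parts. - $D_e(m,n)$ is the number of partitions of $n$ into exactly $m$ distinct even parts. - By convention $D_e(0,n)=D_o(0,n)$ equals $1$ if $n=0$ and $0$ otherwise. *)

(* Defs.v *)
(* Partitions into distinct parts of n are encoded as finite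
   sets A of positive integers <= n (elements of 'I_n.+1, 0 excluded) whose
   elements sum to n; the parts are the elements of A. *)
From mathcomp Require Import all_boot all_order all_algebra.
Set Implicit Arguments. Unset Strict Implicit. Unset Printing Implicit Defensive.

Definition dpart (n : nat) (A : {set 'I_n.+1}) : bool :=
  (ord0 \notin A) && (\sum_(i in A) val i == n).

Definition p_edod (m n : nat) : nat :=
  #|[set A : {set 'I_n.+1} | [&& dpart A, #|A| == m,
      [exists i in A, odd (val i)] &
      [forall i in A, forall j in A, (odd (val i) && ~~ odd (val j)) ==> (val i < val j)]]]|.

Definition D_o (m n : nat) : nat :=
  #|[set A : {set 'I_n.+1} | [&& dpart A, #|A| == m & [forall i in A, odd (val i)]]]|.

Definition D_e (m n : nat) : nat :=
  #|[set A : {set 'I_n.+1} | [&& dpart A, #|A| == m & [forall i in A, ~~ odd (val i)]]]|.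

(* Main.v *)
Require Import Defs.
From mathcomp Require Import all_boot all_order all_algebra.
From mathcomp Require Import zify.
Import GRing.Theory.
Set Implicit Arguments. Unset Strict Implicit. Unset Printing Implicit Defensive.

Lemma card_bij (T1 T2 : finType) (X : {set T1}) (Y : {set T2}) (f : T1 -> T2) (g : T2 -> T1) :
  {in X, forall x, f x \in Y} -> {in Y, forall y, g y \in X} ->
  {in X, cancel f g} -> {in Y, cancel g f} -> #|X| = #|Y|.
Proof.
move=> fX gY gf fg; apply/eqP; rewrite eqn_leq; apply/andP; split.
- rewrite -(@card_in_imset _ _ f X); last first.
    by move=> x y xX yX e; rewrite -(gf x xX) e gf.
  apply: subset_leq_card; apply/subsetP => y /imsetP[x xX ->]; exact: fX.
- rewrite -(@card_in_imset _ _ g Y); last first.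
    by move=> x y xX yX e; rewrite -(fg x xX) e fg.
  apply: subset_leq_card; apply/subsetP => y /imsetP[x xX ->]; exact: gY.
Qed.

Lemma OEP K (A : {set 'I_K}) :
  reflect (forall i j, i \in A -> j \in A -> odd i -> ~~ odd j -> i < j)
    [forall i in A, forall j in A, (odd (val i) && ~~ odd (val j)) ==> (val i < val j)].
Proof.
apply: (iffP forall_inP) => H.
- move=> i j iA jA oi ej; move/forall_inP: (H i iA) => /(_ j jA) /implyP; apply.
  by rewrite oi ej.
- move=> i iA; apply/forall_inP => j jA; apply/implyP => /andP[oi ej]; exact: H.
Qed.

Definition omax K (A : {set 'I_K}) : nat := \max_(i in A | odd i) val i.
Definition emin K (A : {set 'I_K}) : nat := K - \max_(i in A | ~~ odd i) (K - val i).

Lemma omax_eq K (A : {set 'I_K}) (x : 'I_K) : x \in A -> odd x ->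
  (forall i, i \in A -> odd i -> i <= x) -> omax A = x.
Proof.
move=> xA ox H; apply/eqP; rewrite eqn_leq; apply/andP; split.
- by apply/bigmax_leqP => i /andP[iA oi]; exact: H.
- by apply: (@leq_bigmax_cond _ (fun i => (i \in A) && odd i) (fun i => val i) x); rewrite xA.
Qed.

Lemma emin_eq K (A : {set 'I_K}) (x : 'I_K) : x \in A -> ~~ odd x ->
  (forall i, i \in A -> ~~ odd i -> x <= i) -> emin A = x.
Proof.
move=> xA ox H; rewrite /emin.
have -> : \max_(i in A | ~~ odd i) (K - val i) = K - x.
  apply/eqP; rewrite eqn_leq; apply/andP; split.
  - by apply/bigmax_leqP => i /andP[iA oi]; apply: leq_sub2l; exact: H.
  - by apply: (@leq_bigmax_cond _ (fun i => (i \in A) && ~~ odd i) (fun i => K - val i) x); rewrite xA.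
by rewrite subKn // ltnW.
Qed.

Lemma omax_ex K (A : {set 'I_K}) : [exists i in A, odd (val i)] ->
  exists2 x : 'I_K, x \in A & [/\ odd x, omax A = x & forall i, i \in A -> odd i -> i <= x].
Proof.
case/exists_inP => i0 iA oi.
have P0 : (i0 \in A) && odd i0 by rewrite iA.
case: (@arg_maxnP _ i0 (fun i => (i \in A) && odd i) (fun i : 'I_K => val i) P0) => x /andP[xA ox] H.
exists x => //; split => //; last by move=> i iA' oi'; apply: H; rewrite iA'.
by apply: omax_eq => // i iA' oi'; apply: H; rewrite iA'.
Qed.

Lemma emin_ex K (A : {set 'I_K}) : [exists i in A, ~~ odd (val i)] ->
  exists2 x : 'I_K, x \in A & [/\ ~~ odd x, emin A = x & forall i, i \in A -> ~~ odd i -> x <= i].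
Proof.
case/exists_inP => i0 iA oi.
have P0 : (i0 \in A) && ~~ odd i0 by rewrite iA.
case: (@arg_minnP _ i0 (fun i => (i \in A) && ~~ odd i) (fun i : 'I_K => val i) P0) => x /andP[xA ox] H.
exists x => //; split => //; last by move=> i iA' oi'; apply: H; rewrite iA'.
by apply: emin_eq => // i iA' oi'; apply: H; rewrite iA'.
Qed.

Lemma sum1_le K (A : {set 'I_K}) i : i \in A -> val i <= \sum_(k in A) val k.
Proof. by move=> iA; rewrite (bigD1 i) //= leq_addr. Qed.

Lemma sum2_le K (A : {set 'I_K}) i j : i \in A -> j \in A -> i != j ->
  val i + val j <= \sum_(k in A) val k.
Proof.
move=> iA jA ij; rewrite (bigD1 i) //= (bigD1 j) /=; last by rewrite jA eq_sym.
by rewrite addnA leq_addr.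
Qed.

Lemma odd_lt2 a b : odd a = odd b -> a < b -> a.+1 < b.
Proof.
move=> oab; rewrite leq_eqVlt; case/orP => // /eqP e.
by move: oab; rewrite -e /=; case: (odd a).
Qed.

Lemma ev_pred x : odd x -> ~~ odd x.-1.
Proof. by case: x => [|x] //= ->. Qed.

Definition Pset m n : {set {set 'I_n.+1}} :=
  [set A : {set 'I_n.+1} | [&& dpart A, #|A| == m,
      [exists i in A, odd (val i)] &
      [forall i in A, forall j in A, (odd (val i) && ~~ odd (val j)) ==> (val i < val j)]]].

Definition Qset m n : {set {set 'I_n.+1}} :=
  [set A : {set 'I_n.+1} | [&& \sum_(i in A) val i == n, #|A| == m,
      [exists i in A, ~~ odd (val i)] &
      [forall i in A, forall j in A, (odd (val i) && ~~ odd (val j)) ==> (val i < val j)]]].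

Lemma Pspec m n (A : {set 'I_n.+1}) : A \in Pset m n ->
  [/\ ord0 \notin A, \sum_(i in A) val i = n, #|A| = m,
     (forall i j, i \in A -> j \in A -> odd i -> ~~ odd j -> i < j) &
     [exists i in A, odd (val i)]].
Proof. by rewrite inE /dpart => /and4P[/andP[z /eqP s] /eqP c e /OEP o]. Qed.

Lemma Qspec m n (A : {set 'I_n.+1}) : A \in Qset m n ->
  [/\ \sum_(i in A) val i = n, #|A| = m,
     (forall i j, i \in A -> j \in A -> odd i -> ~~ odd j -> i < j) &
     [exists i in A, ~~ odd (val i)]].
Proof. by rewrite inE => /and4P[/eqP s /eqP c e /OEP o]. Qed.

Definition gPhi K L (A : {set 'I_K}) (i : 'I_K) : 'I_L.+1 := inord ((i:nat) - ((i:nat) == omax A)).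
Definition Phi K L (A : {set 'I_K}) : {set 'I_L.+1} := [set gPhi L A i | i in A].
Definition hPsi K L (A : {set 'I_K}) (i : 'I_K) : 'I_L.+1 := inord ((i:nat) + ((i:nat) == emin A)).
Definition Psi K L (A : {set 'I_K}) : {set 'I_L.+1} := [set hPsi L A i | i in A].
Arguments gPhi {K} L A i. Arguments Phi {K} L A. Arguments hPsi {K} L A i. Arguments Psi {K} L A.

Lemma Phi_main n m (A : {set 'I_n.+2}) : A \in Pset m n.+1 ->
  Phi n A \in Qset m n /\ Psi n.+1 (Phi n A) = A.
Proof.
move=> HA; have [z s c oe ex] := Pspec HA.
have [io ioA [oio omaxE maxo]] := omax_ex ex.
have io1 : 0 < io by move: oio; case: (nat_of_ord io).
have gv : forall i, i \in A -> gPhi n A i = val i - (i == io) :> nat.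
  move=> i iA; rewrite /gPhi omaxE.
  case: (eqVneq i io) => [->|ni] /=.
    by rewrite eqxx inordK //; have := ltn_ord io; lia.
  have ni' : ((i : nat) == io) = false by apply: negbTE.
  rewrite ni' inordK //.
  have := sum2_le iA ioA ni; rewrite s subn0 /=; lia.
have ginj : {in A &, injective (gPhi n A)}.
  move=> i j iA jA /(congr1 (@nat_of_ord _)); rewrite !gv //.
  case: (eqVneq i io) => [->|ni]; case: (eqVneq j io) => [->|nj] //=;
    rewrite ?subn0 ?subn1.
  - move=> e; have := ev_pred oio; rewrite e => ej.
    have := oe _ _ ioA jA oio ej; lia.
  - move=> e; have := ev_pred oio; rewrite -e => ej.
    have := oe _ _ ioA iA oio ej; lia.
  - by move=> e; apply: val_inj.
have evio : ~~ odd (gPhi n A io) by rewrite gv // eqxx subn1 ev_pred.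
split.
  rewrite inE; apply/and4P; split.
  - apply/eqP; rewrite /Phi big_imset //= (eq_bigr (fun i => val i - (i == io))); last exact: gv.
    rewrite (bigD1 io) //= eqxx.
    rewrite (eq_bigr (fun i => val i)); last by move=> i /andP[_ /negbTE ->]; rewrite subn0.
    move: s; rewrite (bigD1 io) //= subn1; lia.
  - by rewrite card_in_imset // c.
  - by apply/exists_inP; exists (gPhi n A io) => //; apply: imset_f.
  - apply/OEP => i' j' /imsetP[i iA ->] /imsetP[j jA ->]; rewrite !gv //.
    case: (eqVneq i io) => [->|ni]; first by rewrite ?eqxx /= subn1 => o1; move: (ev_pred oio); rewrite o1.
    rewrite /= subn0 => oi.
    case: (eqVneq j io) => [->|nj]; rewrite ?eqxx /= ?subn1 ?subn0 => ej.
    + have h1 := maxo i iA oi.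
      have h2 : val i != val io by rewrite val_eqE.
      have h3 : i < io by rewrite ltn_neqAle h2.
      have e : odd i = odd io by rewrite oi oio.
      have := odd_lt2 e h3; lia.
    + exact: oe.
have eminE : emin (Phi n A) = io.-1.
  rewrite (@emin_eq _ _ (gPhi n A io)); first by rewrite gv // eqxx subn1.
  - exact: imset_f.
  - exact: evio.
  move=> j' /imsetP[j jA ->]; rewrite !gv // eqxx /= subn1.
  case: (eqVneq j io) => [->|nj]; first by rewrite /= subn1.
  rewrite /= subn0 => ej; have := oe _ _ ioA jA oio ej; lia.
rewrite /Psi -imset_comp -[RHS]imset_id; apply: eq_in_imset => i iA /=.
apply: ord_inj; rewrite /= /hPsi eminE gv //.
case: (eqVneq i io) => [->|ni] /=.
  by rewrite subn1 eqxx inordK /=; have := ltn_ord io; lia.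
rewrite subn0; have -> : ((i:nat) == io.-1) = false.
  apply/negbTE/eqP => e; have ei : ~~ odd i by rewrite e ev_pred.
  have := oe _ _ ioA iA oio ei; lia.
by rewrite /= addn0 inordK.
Qed.

Lemma Psi_main n m (B : {set 'I_n.+1}) : B \in Qset m n ->
  Psi n.+1 B \in Pset m n.+1 /\ Phi n (Psi n.+1 B) = B.
Proof.
move=> HB; have [s c oe ex] := Qspec HB.
have [ie ieB [eie eminE mine]] := emin_ex ex.
have hv : forall j, j \in B -> hPsi n.+1 B j = (j:nat) + (j == ie) :> nat.
  move=> j jB; rewrite /hPsi eminE.
  case: (eqVneq j ie) => [->|nj] /=.
    by rewrite eqxx inordK //; have := ltn_ord ie; lia.
  have nj' : ((j : nat) == ie) = false by apply: negbTE.
  by rewrite nj' inordK /= addn0 //; have := ltn_ord j; lia.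
have hinj : {in B &, injective (hPsi n.+1 B)}.
  move=> i j iB jB /(congr1 (@nat_of_ord _)); rewrite !hv //.
  case: (eqVneq i ie) => [->|ni]; case: (eqVneq j ie) => [->|nj] //=;
    rewrite ?addn0 ?addn1.
  - move=> e; have oj : odd j by rewrite -e /= eie.
    have := oe _ _ jB ieB oj eie; lia.
  - move=> e; have oj : odd i by rewrite e /= eie.
    have := oe _ _ iB ieB oj eie; lia.
  - by move=> e; apply: ord_inj.
have oie : odd (hPsi n.+1 B ie) by rewrite hv // eqxx /= addn1 /= eie.
split.
  rewrite inE; apply/and4P; split.
  - rewrite /dpart; apply/andP; split.
      apply/negP => /imsetP[j jB] /(congr1 (@nat_of_ord _)); rewrite hv //=.
      case: (eqVneq j ie) => [->|nj] /=; first by lia.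
      rewrite addn0 => e.
      have ej : ~~ odd j by rewrite -e.
      have := mine j jB ej; rewrite -e leqn0 => /eqP e2.
      by move: nj; rewrite -val_eqE /= -e e2 eqxx.
    apply/eqP; rewrite /Psi big_imset //= (eq_bigr (fun i : 'I_n.+1 => (i:nat) + (i == ie))); last exact: hv.
    rewrite (bigD1 ie) //= eqxx.
    rewrite (eq_bigr (fun i : 'I_n.+1 => (i:nat))); last by move=> i /andP[_ /negbTE ->]; rewrite addn0.
    move: s; rewrite (bigD1 ie) //=; lia.
  - by rewrite card_in_imset // c.
  - by apply/exists_inP; exists (hPsi n.+1 B ie) => //; apply: imset_f.
  - apply/OEP => i' j' /imsetP[i iB ->] /imsetP[j jB ->]; rewrite !hv //.
    case: (eqVneq j ie) => [->|nj]; first by rewrite ?eqxx /= addn1 /= (negbTE eie).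
    rewrite /= addn0 => oi ej.
    have h1 := mine j jB ej.
    have h2 : (ie:nat) != j by rewrite val_eqE eq_sym.
    have h3 : ie < j by rewrite ltn_neqAle h2.
    have e : odd ie = odd j by move: eie ej; do 2 case: odd.
    have h4 := odd_lt2 e h3.
    case: (eqVneq i ie) => [->|ni] /=; first by rewrite addn1.
    rewrite addn0; move: oi; rewrite (negbTE ni) addn0 => oi; exact: oe.
have omaxE : omax (Psi n.+1 B) = ie.+1.
  rewrite (@omax_eq _ _ (hPsi n.+1 B ie)); first by rewrite hv // eqxx /= addn1.
  - exact: imset_f.
  - exact: oie.
  move=> j' /imsetP[j jB ->]; rewrite !hv // eqxx /= addn1.
  case: (eqVneq j ie) => [->|nj]; first by rewrite /= addn1.
  rewrite /= addn0 => oj; have := oe _ _ jB ieB oj eie; lia.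
rewrite /Phi -imset_comp -[RHS]imset_id; apply: eq_in_imset => i iB /=.
apply: ord_inj; rewrite /= /gPhi omaxE hv //.
case: (eqVneq i ie) => [->|ni] /=.
  by rewrite addn1 eqxx inordK /=; [lia | have := ltn_ord ie; lia].
rewrite addn0; have -> : ((i:nat) == ie.+1) = false.
  apply/negbTE/eqP => e; have oi : odd i by rewrite e /= eie.
  have := oe _ _ iB ieB oi eie; lia.
by rewrite /= subn0 inordK.
Qed.

Lemma card_PQ m n : #|Pset m n.+1| = #|Qset m n|.
Proof.
apply: (@card_bij _ _ _ _ (Phi n) (Psi n.+1)) => A HA.
- exact: (Phi_main HA).1.
- exact: (Psi_main HA).1.
- exact: (Phi_main HA).2.
- exact: (Psi_main HA).2.
Qed.

Definition ExO n : {set {set 'I_n.+1}} := [set B : {set 'I_n.+1} | [exists i in B, odd (val i)]].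
Definition ExE n : {set {set 'I_n.+1}} := [set B : {set 'I_n.+1} | [exists i in B, ~~ odd (val i)]].
Definition Z0 n : {set {set 'I_n.+1}} := [set B : {set 'I_n.+1} | ord0 \in B].
Definition Doset m n : {set {set 'I_n.+1}} :=
  [set A : {set 'I_n.+1} | [&& dpart A, #|A| == m & [forall i in A, odd (val i)]]].
Definition Deset m n : {set {set 'I_n.+1}} :=
  [set A : {set 'I_n.+1} | [&& dpart A, #|A| == m & [forall i in A, ~~ odd (val i)]]].

Lemma L1 m n : Qset m n :&: ExO n = Pset m n :&: ExE n.
Proof.
apply/setP => B; rewrite !inE /dpart; apply/idP/idP.
- case/andP => /and4P[s c ee oe] eo.
  have z : ord0 \notin B.
    apply/negP => zB; case/exists_inP: eo => i iB oi.
    by have := (elimT (OEP B) oe) i ord0 iB zB oi isT.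
  by rewrite z s c eo oe ee.
- case/andP => /and4P[/andP[_ s] c eo oe] ee.
  by rewrite s c eo oe ee.
Qed.

Lemma L2 m n : 0 < m -> Pset m n :\: ExE n = Doset m n.
Proof.
move=> m0; apply/setP => B; rewrite !inE; apply/idP/idP.
- case/andP => ne /and4P[d c _ _]; rewrite d c /=.
  apply/forall_inP => i iB; apply/negPn/negP => oi; move/negP: ne; apply.
  by apply/exists_inP; exists i.
- case/and3P => d c ao.
  have : 0 < #|B| by rewrite (eqP c).
  case/card_gt0P => i0 i0B.
  rewrite d c /=; apply/and3P; split.
  + apply/negP => /exists_inP[i iB ei]; by move: ei; rewrite (forall_inP ao i iB).
  + by apply/exists_inP; exists i0 => //; exact: (forall_inP ao i0 i0B).
  + apply/OEP => i j _ jB _ ej; by move: ej; rewrite (forall_inP ao j jB).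
Qed.

Lemma L3 m n : 0 < m -> (Qset m n :\: ExO n) :\: Z0 n = Deset m n.
Proof.
move=> m0; apply/setP => B; rewrite !inE /dpart; apply/idP/idP.
- case/and3P => z no /and4P[s c _ _]; rewrite z s c /=.
  apply/forall_inP => i iB; apply/negP => oi; move/negP: no; apply.
  by apply/exists_inP; exists i.
- case/and3P => /andP[z s] c ae.
  have : 0 < #|B| by rewrite (eqP c).
  case/card_gt0P => i0 i0B.
  rewrite z s c /=; apply/and3P; split.
  + apply/negP => /exists_inP[i iB oi]; by move: oi; rewrite (negbTE (forall_inP ae i iB)).
  + by apply/exists_inP; exists i0 => //; exact: (forall_inP ae i0 i0B).
  + apply/OEP => i j iB _ oi _; by move: oi; rewrite (negbTE (forall_inP ae i iB)).
Qed.

Lemma L4 m n : #|(Qset m.+1 n :\: ExO n) :&: Z0 n| = #|Deset m n|.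
Proof.
apply: (@card_bij _ _ _ _ (fun B => B :\ ord0) (fun C => ord0 |: C)).
- move=> B; rewrite !inE /dpart => /andP[/and5P[no /eqP s /eqP c _ _] zB].
  rewrite setD11 /=; apply/and3P; split.
  + by move: s; rewrite (big_setD1 ord0) //= add0n => ->.
  + by move: c; rewrite (cardsD1 ord0) zB add1n => -[] ->.
  + apply/forall_inP => i; rewrite in_setD1 => /andP[_ iB]; apply/negP => oi.
    by move/negP: no; apply; apply/exists_inP; exists i.
- move=> C; rewrite !inE /dpart => /and3P[/andP[z /eqP s] /eqP c ae].
  rewrite eqxx /= andbT; apply/and5P; split.
  + apply/negP => /exists_inP[i]; rewrite in_setU1 => /orP[/eqP -> //|iC] oi.
    by move: oi; rewrite (negbTE (forall_inP ae i iC)).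
  + by rewrite big_setU1 //= s.
  + by rewrite cardsU1 z c.
  + by apply/exists_inP; exists ord0 => //; exact: setU11.
  + apply/OEP => i j; rewrite in_setU1 => /orP[/eqP -> //|iC] _ oi.
    by move: oi; rewrite (negbTE (forall_inP ae i iC)).
- by move=> B; rewrite !inE => /andP[_ zB]; rewrite setD1K.
- by move=> C; rewrite !inE => /and3P[/andP[z _] _ _]; rewrite setU1K.
Qed.

Local Open Scope ring_scope.

Theorem mainTheorem4 (m n : nat) (hm : (1 <= m)%N) (hn : (1 <= n)%N) :
  (p_edod m n)%:Z - (p_edod m n.-1)%:Z
  = (D_e m n.-1)%:Z + (D_e m.-1 n.-1)%:Z - (D_o m n.-1)%:Z.
Proof.
case: n hn => [//|n] _; case: m hm => [//|m] _.
rewrite !succnK.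
have e1 : p_edod m.+1 n.+1 = (#|Qset m.+1 n :&: ExO n| + (#|Deset m n| + #|Deset m.+1 n|))%N.
  have -> : p_edod m.+1 n.+1 = #|Pset m.+1 n.+1| by [].
  rewrite card_PQ -(cardsID (ExO n) (Qset m.+1 n)); congr (_ + _)%N.
  by rewrite -(cardsID (Z0 n)) L4 L3.
have e2 : p_edod m.+1 n = (#|Qset m.+1 n :&: ExO n| + #|Doset m.+1 n|)%N.
  have -> : p_edod m.+1 n = #|Pset m.+1 n| by [].
  by rewrite -(cardsID (ExE n) (Pset m.+1 n)) L2 // L1.
have e3 : D_e m.+1 n = #|Deset m.+1 n| by [].
have e4 : D_e m n = #|Deset m n| by [].
have e5 : D_o m.+1 n = #|Doset m.+1 n| by [].
rewrite e1 e2 e3 e4 e5; lia.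
Qed.
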